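(* Let $(S,+)$ be an infinite left weakly cancellative semigroup with no idempotent element, and let $A\subseteq S$ be an IP set. Then there is a family $\{A_\alpha:\alpha<2^\omega\}$ of subsets of $A$ such that each $A_\alpha$ is an infinite IP set and $A_\alpha\cap A_\beta$ is finite whenever $\alpha<\beta<2^\omega$.
   Context: $S$ is left weakly cancellative if for all $a,b\in S$ the set $\{x: a+x=b\}$ is finite; $e$ is idempotent if $e+e=e$. For a sequence $\langle x_n\rangle_{n=1}^\infty$ in $S$, $\mathrm{FS}(\langle x_n\rangle_{n=1}^\infty)$ is the set of all sums $\sum_{n\in H}x_n$ (in increasing order of indices) with $H$ a nonempty finite subset of $\mathbb{N}$. $A$ is an IP set if $\mathrm{FS}(\langle x_n\rangle_{n=1}^\infty)\subseteq A$ for some sequence $\langle x_n\rangle_{n=1}^\infty$ in $S$. *)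

(* Defs.v *)
From mathcomp Require Import all_boot.
From mathcomp Require Import boolp classical_sets cardinality.
Set Implicit Arguments. Unset Strict Implicit. Unset Printing Implicit Defensive.
Local Open Scope classical_set_scope.

Definition associative_op (S : Type) (op : S -> S -> S) : Prop :=
  forall a b c, op a (op b c) = op (op a b) c.

Definition left_weakly_cancellative (S : Type) (op : S -> S -> S) : Prop :=
  forall a b : S, finite_set [set x | op a x = b].

Definition idempotent_elt (S : Type) (op : S -> S -> S) (e : S) : Prop :=
  op e e = e.

Definition seq_sum (S : Type) (op : S -> S -> S) (x : nat -> S)
  (h : nat) (t : seq nat) : S :=
  foldl (fun acc i => op acc (x i)) (x h) t.

(* FS(<x_n>): sums over nonempty finite H ⊆ ℕ in increasing order of indices;
   H is encoded as the strictly increasing list h :: t of its elements. *)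
Definition FS (S : Type) (op : S -> S -> S) (x : nat -> S) : set S :=
  [set s | exists (h : nat) (t : seq nat),
      sorted ltn (h :: t) /\ s = seq_sum op x h t].

Definition IP_set (S : Type) (op : S -> S -> S) (A : set S) : Prop :=
  exists x : nat -> S, FS op x `<=` A.

(* Main.v *)
Require Import Defs.
From mathcomp Require Import all_boot.
From mathcomp Require Import boolp classical_sets cardinality.
From mathcomp Require Import zify.
Local Open Scope classical_set_scope.
Set Implicit Arguments. Unset Strict Implicit.


Lemma foldl_op S (op : S -> S -> S) (Ha : associative_op op) (f : nat -> S) a b t :
  foldl (fun acc i => op acc (f i)) (op a b) t = op a (foldl (fun acc i => op acc (f i)) b t).
Proof. elim: t b => //= i t IH b; by rewrite -Ha IH. Qed.

Lemma seq_sum_cat S (op : S -> S -> S) (Ha : associative_op op) (f : nat -> S) h t j u :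
  seq_sum op f h (t ++ j :: u) = op (seq_sum op f h t) (seq_sum op f j u).
Proof. by rewrite /seq_sum foldl_cat /= foldl_op. Qed.

Lemma seq_sum_rcons S (op : S -> S -> S) (f : nat -> S) h t n :
  seq_sum op f h (rcons t n) = op (seq_sum op f h t) (f n).
Proof. by rewrite /seq_sum foldl_rcons. Qed.

Lemma seq_sum_map S (op : S -> S -> S) (f : nat -> S) (c : nat -> nat) h t :
  seq_sum op (fun m => f (c m)) h t = seq_sum op f (c h) (map c t).
Proof. rewrite /seq_sum; elim: t (f (c h)) => //= i t IH a; by rewrite IH. Qed.

Lemma seq_sum_eq S (op : S -> S -> S) (f g : nat -> S) h t :
  (forall i, i \in h :: t -> f i = g i) -> seq_sum op f h t = seq_sum op g h t.
Proof.
move=> E; rewrite /seq_sum E ?mem_head //.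
have : forall i, i \in t -> f i = g i by move=> i it; apply: E; rewrite inE it orbT.
elim: t (g h) {E} => //= i t IH a E'; rewrite E' ?mem_head // IH // => j jt.
by apply: E'; rewrite inE jt orbT.
Qed.

Definition blk S (op : S -> S -> S) (x : nat -> S) k len := seq_sum op x k (iota k.+1 len).

Lemma blk_split S (op : S -> S -> S) (Ha : associative_op op) x k l1 l2 :
  blk op x k (l1 + l2).+1 = op (blk op x k l1) (blk op x (k + l1).+1 l2).
Proof.
rewrite /blk -addnS iotaD -seq_sum_cat //= addSn.
Qed.

Fixpoint mult S (op : S -> S -> S) (w : S) n := if n is m.+1 then op (mult op w m) w else w.

Lemma multD S (op : S -> S -> S) (Ha : associative_op op) w a b :
  op (mult op w a) (mult op w b) = mult op w (a + b).+1.
Proof. elim: b => [|b IH] /=; first by rewrite addn0. by rewrite Ha IH addnS. Qed.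

Lemma mult_idem S (op : S -> S -> S) (Ha : associative_op op) w i j :
  i < j -> mult op w i = mult op w j -> exists e, op e e = e.
Proof.
move=> ij E.
have per : forall m, i <= m -> mult op w m = mult op w (m + (j - i)).
  move=> m im; case E1: (m - i) => [|t].
    have -> : m = i by lia.
    by rewrite E; congr mult; lia.
  have -> : m = (i + t).+1 by lia.
  rewrite -multD // E multD //; congr mult; lia.
have perq : forall q m, i <= m -> mult op w m = mult op w (m + q * (j - i)).
  elim=> [|q IH] m im; first by rewrite addn0.
  rewrite IH // per; last by lia.
  congr mult; rewrite mulSn; lia.
exists (mult op w ((i.+1) * (j - i)).-1).
have pos : 0 < i.+1 * (j - i) by rewrite muln_gt0 /= subn_gt0.
rewrite multD //.
set r := (i.+1 * (j - i)).-1.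
rewrite [in RHS](perq i.+1 r); last by rewrite /r; nia.
congr mult; rewrite /r; lia.
Qed.


Lemma inj_nat_infinite T (f : nat -> T) (B : set T) :
  injective f -> (forall n, B (f n)) -> infinite_set B.
Proof.
move=> fi fB Bfin; apply: infinite_nat.
have : finite_set (f @` setT) by apply: sub_finite_set Bfin => _ [n _ <-]; exact: fB.
rewrite (eq_finite_set (inj_card_eq _)) //; by move=> a b _ _; apply: fi.
Qed.

Lemma noninj_nat T (f : nat -> T) (B : set T) :
  finite_set B -> (forall n, B (f n)) -> exists i j, i < j /\ f i = f j.
Proof.
move=> Bf fB; apply: contrapT => H; apply: (inj_nat_infinite (f := f)) Bf => //.
move=> a b E; case: (ltngtP a b) => // ab; exfalso; apply: H.
  by exists a, b.
by exists b, a.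
Qed.

Lemma blk_avoid S (op : S -> S -> S) (Ha : associative_op op)
  (Hlwc : left_weakly_cancellative op) (Hnoid : forall e : S, ~ idempotent_elt op e)
  x k (Bad : set S) : finite_set Bad -> exists len, ~ Bad (blk op x k len).
Proof.
move=> Bf; apply: contrapT => H.
have inB : forall n, Bad (blk op x k n).
  by move=> n; apply: contrapT => nB; apply: H; exists n.
have [l1 [l2 [lt12 E]]] := noninj_nat Bf inB.
set v := blk op x k l1 in E.
set w := blk op x (k + l1).+1 (l2 - l1).-1.
have vw : op v w = v.
  rewrite [RHS]E /v /w -blk_split //; congr blk; lia.
have vm : forall m, op v (mult op w m) = v.
  elim=> [|m IH] //=; by rewrite Ha IH vw.
have [i [j [ij Eij]]] := noninj_nat (Hlwc v v) (f := mult op w) vm.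
have [e He] := mult_idem Ha ij Eij.
exact: (Hnoid e).
Qed.


Definition Sums S (op : S -> S -> S) (f : nat -> S) n : set S :=
  [set s | exists h t, sorted ltn (h :: t) /\ last h t < n /\ s = seq_sum op f h t].

Lemma Sums_step S (op : S -> S -> S) f n :
  Sums op f n.+1 `<=` Sums op f n `|` [set f n] `|` (fun a => op a (f n)) @` Sums op f n.
Proof.
move=> s [h [t [st [lt ->]]]]; rewrite /setU /=.
have [ltn'|] := ltnP (last h t) n.
  by left; left; exists h, t.
move=> ge; have eq : last h t = n by lia.
case/lastP: t st eq {lt ge} => [|t0 j] /=.
  by move=> _ ->; left; right; rewrite /seq_sum.
rewrite rcons_path last_rcons => /andP [p0 lj] E; subst j.
right; exists (seq_sum op f h t0); first by exists h, t0.
by rewrite seq_sum_rcons.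
Qed.

Lemma Sums_finite S (op : S -> S -> S) f n : finite_set (Sums op f n).
Proof.
elim: n => [|n IH].
  apply: sub_finite_set (finite_set0 S) => s [h [t [_ [lt _]]]] //.
apply: sub_finite_set (Sums_step (f := f) (n := n)) _.
rewrite finite_setU; split; last exact: finite_image.
rewrite finite_setU; split => //; exact: finite_set1.
Qed.

Definition good S (op : S -> S -> S) x (f : nat -> S) n k len :=
  ~ Sums op f n (blk op x k len) /\
  forall a, Sums op f n a -> ~ Sums op f n (op a (blk op x k len)).

Lemma good_exists S (op : S -> S -> S) (Ha : associative_op op)
  (Hlwc : left_weakly_cancellative op) (Hnoid : forall e : S, ~ idempotent_elt op e)
  x f n k : exists len, good op x f n k len.
Proof.
set B := Sums op f n.
pose Bad := B `|` \bigcup_(a in B) \bigcup_(b in B) [set c | op a c = b].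
have fB : finite_set Bad.
  rewrite finite_setU; split; first exact: Sums_finite.
  apply: bigcup_finite; first exact: Sums_finite.
  move=> a _; apply: bigcup_finite; first exact: Sums_finite.
  move=> b _; exact: Hlwc.
have [len nB] := blk_avoid Ha Hlwc Hnoid x k fB.
exists len; split.
  by move=> Bc; apply: nB; left.
by move=> a Ba Bac; apply: nB; right; exists a => //; exists (op a (blk op x k len)).
Qed.


Lemma le_last h t : path ltn h t -> forall i, i \in h :: t -> i <= last h t.
Proof.
elim: t h => [|j t IH] h /=; first by move=> _ i; rewrite inE => /eqP->.
move=> /andP[hj p] i; rewrite inE => /orP[/eqP->|it].
  have := IH j p j (mem_head _ _); lia.
exact: IH.
Qed.

Definition chlen S (op : S -> S -> S) x (f : nat -> S) n k : nat :=
  if pselect (exists len, good op x f n k len) is left H then proj1_sig (cid H) else 0.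

Lemma chlen_good S (op : S -> S -> S) (Ha : associative_op op)
  (Hlwc : left_weakly_cancellative op) (Hnoid : forall e : S, ~ idempotent_elt op e)
  x f n k : good op x f n k (chlen op x f n k).
Proof.
rewrite /chlen; case: pselect => [H|H]; first exact: (proj2_sig (cid H)).
by exfalso; apply: H; apply: good_exists.
Qed.

Fixpoint st S (op : S -> S -> S) x n : nat * (nat -> S) :=
  match n with
  | 0 => (0, fun _ => x 0)
  | m.+1 => let p := st op x m in
            let L := chlen op x p.2 m p.1 in
            ((p.1 + L).+1, fun i => if i == m then blk op x p.1 L else p.2 i)
  end.

Definition KK S (op : S -> S -> S) x n := (st op x n).1.
Definition LL S (op : S -> S -> S) x n := chlen op x (st op x n).2 n (KK op x n).
Definition ww S (op : S -> S -> S) x n := blk op x (KK op x n) (LL op x n).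

Lemma KK_succ S (op : S -> S -> S) x n : KK op x n.+1 = (KK op x n + LL op x n).+1.
Proof. by []. Qed.

Lemma st_stable S (op : S -> S -> S) x i m : i < m -> (st op x m).2 i = ww op x i.
Proof.
elim: m => [|m IH] // lt /=.
case: eqP => [->|ne] //.
apply: IH; lia.
Qed.

Lemma Sums_congr S (op : S -> S -> S) f g n :
  (forall i, i < n -> f i = g i) -> Sums op f n = Sums op g n.
Proof.
move=> E; apply/seteqP; split => s [h [t [p [l ->]]]]; exists h, t; do 2 split => //;
  apply: seq_sum_eq => i it; [|symmetry]; apply: E; have := le_last p it; lia.
Qed.

Lemma ww_good S (op : S -> S -> S) (Ha : associative_op op)
  (Hlwc : left_weakly_cancellative op) (Hnoid : forall e : S, ~ idempotent_elt op e)
  x n : ~ Sums op (ww op x) n (ww op x n) /\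
        forall a, Sums op (ww op x) n a -> ~ Sums op (ww op x) n (op a (ww op x n)).
Proof.
have := chlen_good Ha Hlwc Hnoid x (st op x n).2 n (KK op x n).
have E : Sums op (st op x n).2 n = Sums op (ww op x) n.
  by apply: Sums_congr => i; apply: st_stable.
by rewrite /good E.
Qed.

Lemma ww_lastn S (op : S -> S -> S) (Ha : associative_op op)
  (Hlwc : left_weakly_cancellative op) (Hnoid : forall e : S, ~ idempotent_elt op e)
  x h t : path ltn h t -> ~ Sums op (ww op x) (last h t) (seq_sum op (ww op x) h t).
Proof.
have [G1 G2] := ww_good Ha Hlwc Hnoid x (last h t).
case/lastP: t G1 G2 => [|t0 j] /= G1 G2; first by move=> _; exact: G1.
rewrite rcons_path last_rcons seq_sum_rcons => /andP[p0 lj].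
rewrite last_rcons in G2; apply: G2; by exists h, t0.
Qed.

Lemma ww_last S (op : S -> S -> S) (Ha : associative_op op)
  (Hlwc : left_weakly_cancellative op) (Hnoid : forall e : S, ~ idempotent_elt op e)
  x h t h' t' : path ltn h t -> path ltn h' t' ->
  seq_sum op (ww op x) h t = seq_sum op (ww op x) h' t' -> last h t = last h' t'.
Proof.
move=> p p' E.
case: (ltngtP (last h t) (last h' t')) => // lt.
  exfalso; have := ww_lastn Ha Hlwc Hnoid (x := x) p'; apply; rewrite -E; by exists h, t.
exfalso; have := ww_lastn Ha Hlwc Hnoid (x := x) p; apply; rewrite E; by exists h', t'.
Qed.


Lemma last_iota k n : last k (iota k.+1 n) = k + n.
Proof. elim: n k => [|n IH] k /=; first by rewrite addn0. by rewrite IH addnS. Qed.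

Lemma blocks_FS S (op : S -> S -> S) (Ha : associative_op op) x (s l : nat -> nat)
  (Hsl : forall m, s m + l m < s m.+1) :
  FS op (fun m => blk op x (s m) (l m)) `<=` FS op x.
Proof.
have mono : forall m n, m < n -> s m + l m < s n.
  move=> m; elim=> [|n IH] // lt.
  have := Hsl n; rewrite ltnS leq_eqVlt in lt.
  case/orP: lt => [/eqP->|mn]; first lia.
  have := IH mn; lia.
have key : forall h t, path ltn h t -> exists t', path ltn (s h) t' /\
    last (s h) t' = s (last h t) + l (last h t) /\
    seq_sum op (fun m => blk op x (s m) (l m)) h t = seq_sum op x (s h) t'.
  move=> h; elim/last_ind => [|t0 j IH].
    move=> _; exists (iota (s h).+1 (l h)); split; last split.
    - exact: (iota_ltn_sorted (s h) (l h).+1).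
    - by rewrite last_iota.
    - by [].
  rewrite rcons_path => /andP[p0 lj].
  have [t0' [p0' [l0' e0']]] := IH p0.
  exists (t0' ++ s j :: iota (s j).+1 (l j)); split; last split.
  - rewrite cat_path p0' /= l0' mono //=.
    exact: (iota_ltn_sorted (s j) (l j).+1).
  - by rewrite last_cat /= last_iota last_rcons.
  - by rewrite seq_sum_rcons e0' seq_sum_cat.
move=> v [h [t [p ->]]].
have [t' [p' [_ e]]] := key h t p.
by exists (s h), t'.
Qed.

Fixpoint bits (a : nat -> bool) n := if n is m.+1 then bits a m + a m * 2 ^ m else 0.
Definition code (a : nat -> bool) n := 2 ^ n + bits a n.

Lemma bits_lt a n : bits a n < 2 ^ n.
Proof. elim: n => [|n IH] //=; rewrite expnS; case: (a n) => /=; lia. Qed.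

Lemma code_incr a n : code a n < code a n.+1.
Proof. rewrite /code; have := bits_lt a n; rewrite expnS; lia. Qed.

Lemma code_mono a : {homo code a : i j / i < j >-> i < j}.
Proof. apply: homo_ltn; [move=> ? ? ?; lia | exact: code_incr]. Qed.

Lemma bits_eq a b n : bits a n = bits b n -> forall i, i < n -> a i = b i.
Proof.
elim: n => [|n IH] //= E i lt.
have ha := bits_lt a n; have hb := bits_lt b n.
have abn : a n = b n.
  by case: (a n) (b n) E => [] [] /=; lia.
rewrite abn in E.
have E' : bits a n = bits b n by lia.
rewrite ltnS leq_eqVlt in lt; case/orP: lt => [/eqP->|ilt] //; exact: IH.
Qed.

Lemma code_inj a b n m : code a n = code b m -> n = m /\ forall i, i < n -> a i = b i.
Proof.
move=> E.
have le : forall a b n m, n < m -> code a n < code b m.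
  move=> a' b' n' m' lt; rewrite /code; have := bits_lt a' n'.
  have : 2 ^ n'.+1 <= 2 ^ m' by rewrite leq_exp2l.
  rewrite expnS; lia.
case: (ltngtP n m) => [lt|lt|eq].
- by have := le a b n m lt; rewrite E ltnn.
- by have := le b a m n lt; rewrite E ltnn.
subst m; split => //; apply: bits_eq; move: E; rewrite /code; lia.
Qed.

Unset Implicit Arguments. Set Strict Implicit.

Lemma KK_mono S (op : S -> S -> S) x p q : p <= q -> KK op x p <= KK op x q.
Proof.
move=> pq; rewrite -(subnK pq); elim: (q - p) => [|d IH] //=.
rewrite addSn KK_succ; lia.
Qed.

Theorem theorem2p5 (S : Type) (op : S -> S -> S)
  (Hassoc : associative_op op)
  (Hinf : infinite_set [set: S])
  (Hlwc : left_weakly_cancellative op)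
  (Hnoid : forall e : S, ~ idempotent_elt op e)
  (A : set S) (HA : IP_set op A) :
  exists F : (nat -> bool) -> set S,
    (forall a, F a `<=` A /\ infinite_set (F a) /\ IP_set op (F a)) /\
    (forall a b, a <> b -> finite_set (F a `&` F b)).
Proof.
have [x Hx] := HA.
pose w := ww op x.
exists (fun a => FS op (fun m => w (code a m))); split.
  move=> a; split; last split.
  - apply: subset_trans Hx.
    apply: (blocks_FS Hassoc (s := fun m => KK op x (code a m)) (l := fun m => LL op x (code a m))).
    move=> m; have := (@KK_mono S op x _ _ (code_incr a m)); rewrite KK_succ; lia.
  - apply: (inj_nat_infinite (f := fun m => w (code a m))).
      move=> m m' E.
      have := ww_last Hassoc Hlwc Hnoid (x := x) (h := code a m) (t := [::]) (h' := code a m') (t' := [::]) erefl erefl E.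
      move=> /= /code_inj [] //.
    by move=> m; exists m, [::].
  - by exists (fun m => w (code a m)).
move=> a b ab.
have [i0 ne] : exists i0, a i0 <> b i0.
  apply: contrapT => H; apply: ab; apply/funext => i; apply: contrapT => ne; apply: H; by exists i.
apply: sub_finite_set (Sums_finite op (fun m => w (code a m)) i0.+1).
move=> z [[h [t [p ->]]] [h' [t' [p' E]]]].
exists h, t; split => //; split => //.
move: E; rewrite !seq_sum_map => E.
have := ww_last Hassoc Hlwc Hnoid (x := x) (homo_path (code_mono a) p) (homo_path (code_mono b) p') E.
rewrite !last_map => /code_inj [eq pre].
case: (ltnP (last h t) i0.+1) => // le.
by exfalso; apply: ne; apply: pre; lia.
Qed.
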